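(* Let $P$ and $W$ be finite point sets in the plane with $P\cup W$ in general position, let $p\in P$ with $W\setminus\{p\}\neq\varnothing$, and let $w_1,\dots,w_t$ be the neighbors of $p$ in the Delaunay triangulation $\mathrm{DT}(W\cup\{p\})$ listed in counterclockwise radial order around $p$ (indices taken cyclically, $w_{t+1}=w_1$). Let $q\in P\setminus\{p\}$ be a point whose direction from $p$ lies strictly between the directions of $w_i$ and $w_{i+1}$ in the counterclockwise sector from $w_i$ to $w_{i+1}$, and let $\measuredangle w_ipw_{i+1}$ denote the counterclockwise angle of that sector. If $\measuredangle w_ipw_{i+1}\ge\pi$, then $p$ and $q$ are adjacent in $\mathrm{DG}^-(P,W)$. If $\measuredangle w_ipw_{i+1}<\pi$, then $p$ and $q$ are adjacent in $\mathrm{DG}^-(P,W)$ if and only if $q$ lies in the interior of the circle through $p$, $w_i$ and $w_{i+1}$.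
   Context: Let $P$ (the vertices) and $W$ (the witnesses) be finite point sets in $\mathbb{R}^2$; $P$ and $W$ may share points. The witness Delaunay graph $\mathrm{DG}^-(P,W)$ is the graph with vertex set $P$ in which distinct $x,y\in P$ are adjacent if and only if there is an open disk containing no point of $W$ whose bounding circle passes through $x$ and $y$. General position of $P\cup W$ means that no three distinct points of $P\cup W$ are collinear and no four distinct points of $P\cup W$ are concyclic. For a finite point set $Q$ in general position, $\mathrm{DT}(Q)$ is its Delaunay triangulation: distinct $a,b\in Q$ are joined iff some open disk whose boundary passes through $a$ and $b$ contains no point of $Q$. *)

(* Defs.v *)
From Stdlib Require Import Reals List.
Open Scope R_scope.

Definition pt : Type := (R * R)%type.

Definition vsub (a b : pt) : pt := (fst a - fst b, snd a - snd b).

Definition dist2 (a b : pt) : R := (fst a - fst b) ^ 2 + (snd a - snd b) ^ 2.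

Definition collinear (a b c : pt) : Prop :=
  (fst b - fst a) * (snd c - snd a) - (snd b - snd a) * (fst c - fst a) = 0.

Definition concyclic (a b c d : pt) : Prop :=
  exists (o : pt) (r : R),
    dist2 o a = r /\ dist2 o b = r /\ dist2 o c = r /\ dist2 o d = r.

Definition general_position (S : list pt) : Prop :=
  (forall a b c, In a S -> In b S -> In c S ->
     a <> b -> a <> c -> b <> c -> ~ collinear a b c) /\
  (forall a b c d, In a S -> In b S -> In c S -> In d S ->
     a <> b -> a <> c -> a <> d -> b <> c -> b <> d -> c <> d ->
     ~ concyclic a b c d).

(* there is an open disk (center c, squared radius r) whose bounding circle
   passes through x and y and which contains no point of S *)
Definition empty_disk_through (S : list pt) (x y : pt) : Prop :=
  exists (c : pt) (r : R),
    dist2 c x = r /\ dist2 c y = r /\ (forall s, In s S -> r <= dist2 c s).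

Definition DGminus_adj (P W : list pt) (x y : pt) : Prop :=
  In x P /\ In y P /\ x <> y /\ empty_disk_through W x y.

Definition DT_adj (Q : list pt) (a b : pt) : Prop :=
  In a Q /\ In b Q /\ a <> b /\ empty_disk_through Q a b.

Definition rot (t : R) (u : pt) : pt :=
  (cos t * fst u - sin t * snd u, sin t * fst u + cos t * snd u).

(* t is the counterclockwise angle from direction u to direction v,
   normalised to lie in (0, 2*PI] (so equal directions give 2*PI) *)
Definition is_ccw_angle (u v : pt) (t : R) : Prop :=
  0 < t <= 2 * PI /\
  exists k : R, 0 < k /\ rot t u = (k * fst v, k * snd v).

Definition ccw_angle (a p b : pt) (t : R) : Prop :=
  is_ccw_angle (vsub a p) (vsub b p) t.

Definition in_circle_interior (a b c q : pt) : Prop :=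
  exists (o : pt) (r : R),
    dist2 o a = r /\ dist2 o b = r /\ dist2 o c = r /\ dist2 o q < r.

(* Main.v *)
Require Import Defs.
From Stdlib Require Import Reals List Lra Psatz Classical.
Open Scope R_scope.

Definition dot (u v : pt) : R := fst u * fst v + snd u * snd v.
Definition cr (u v : pt) : R := fst u * snd v - snd u * fst v.
Definition n2 (u : pt) : R := dot u u.

Lemma n2_nonneg u : 0 <= n2 u.
Proof. destruct u; unfold n2, dot; simpl; nra. Qed.



Lemma n2_pos p x : x <> p -> 0 < n2 (vsub x p).
Proof.
  destruct x as [x1 x2], p as [p1 p2]; unfold n2, dot, vsub; simpl; intro H.
  destruct (Req_dec x1 p1) as [E1|E1].
  - destruct (Req_dec x2 p2) as [E2|E2].
    + subst; tauto.
    + assert (H0 : x2 - p2 <> 0) by lra.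
      pose proof (Rsqr_pos_lt _ H0) as H1; pose proof (Rle_0_sqr (x1-p1)); pose proof (Rle_0_sqr (x2-p2)); unfold Rsqr in *. lra.
  - assert (H0 : x1 - p1 <> 0) by lra.
    pose proof (Rsqr_pos_lt _ H0) as H1; pose proof (Rle_0_sqr (x1-p1)); pose proof (Rle_0_sqr (x2-p2)); unfold Rsqr in *. lra.
Qed.

Lemma dist2_vsub c x p :
  dist2 c x = n2 (vsub x p) - 2 * dot (vsub c p) (vsub x p) + n2 (vsub c p).
Proof. destruct c, x, p; unfold dist2, n2, dot, vsub; simpl; ring. Qed.

Definition inV (S : list pt) (p c : pt) : Prop :=
  forall s, In s S -> 2 * dot c (vsub s p) <= n2 (vsub s p).

Lemma edt_char S p x :
  empty_disk_through S p x <->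
  exists c, 2 * dot c (vsub x p) = n2 (vsub x p) /\ inV S p c.
Proof.
  split.
  - intros [c0 [r [H1 [H2 H3]]]].
    exists (vsub c0 p).
    rewrite (dist2_vsub c0 p p) in H1. rewrite (dist2_vsub c0 x p) in H2.
    assert (E : vsub p p = (0,0)) by (destruct p; unfold vsub; simpl; f_equal; ring).
    rewrite E in H1. replace (n2 (0,0)) with 0 in H1 by (unfold n2, dot; simpl; ring). replace (dot (vsub c0 p) (0,0)) with 0 in H1 by (unfold dot; simpl; ring).
    split. { lra. }
    intros s Hs. specialize (H3 s Hs). rewrite (dist2_vsub c0 s p) in H3. lra.
  - intros [c [H1 H2]].
    exists (fst p + fst c, snd p + snd c), (n2 c).
    assert (Ec : vsub (fst p + fst c, snd p + snd c) p = c)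
      by (destruct p, c; unfold vsub; simpl; f_equal; ring).
    assert (E : vsub p p = (0,0)) by (destruct p; unfold vsub; simpl; f_equal; ring).
    repeat split.
    + rewrite (dist2_vsub _ p p), Ec, E. unfold n2, dot; simpl; ring.
    + rewrite (dist2_vsub _ x p), Ec. lra.
    + intros s Hs. rewrite (dist2_vsub _ s p), Ec. specialize (H2 s Hs). lra.
Qed.

Lemma inV_cons W p c : inV W p c -> inV (p :: W) p c.
Proof.
  intros H s [Hs|Hs].
  - subst. destruct s; unfold vsub, n2, dot; simpl. lra.
  - auto.
Qed.

Lemma inV_uncons W p c : inV (p :: W) p c -> inV W p c.
Proof. intros H s Hs. apply H; simpl; auto. Qed.


Lemma minimizer (l : list pt) (f g : pt -> R) :
  (exists w, In w l /\ 0 < f w) ->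
  exists ws, In ws l /\ 0 < f ws /\
    forall w, In w l -> 0 < f w -> g ws / f ws <= g w / f w.
Proof.
  induction l as [|x l IH]; intros [w [Hw Hf]].
  - destruct Hw.
  - destruct (classic (exists w, In w l /\ 0 < f w)) as [Hex|Hno].
    + destruct (IH Hex) as [ws [H1 [H2 H3]]].
      destruct (Rlt_dec 0 (f x)) as [Hx|Hx].
      * destruct (Rle_dec (g x / f x) (g ws / f ws)) as [Hle|Hle].
        -- exists x. split; [left; reflexivity|]. split; auto.
           intros w' [E|Hw'] Hf'. { subst; lra. }
           specialize (H3 w' Hw' Hf'). lra.
        -- exists ws. split; [right; auto|]. split; auto.
           intros w' [E|Hw'] Hf'. { subst; lra. } auto.
      * exists ws. split; [right; auto|]. split; auto.
        intros w' [E|Hw'] Hf'. { subst; lra. } auto.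
    + exists x. destruct Hw as [E|Hw].
      * subst. split; [left; reflexivity|]. split; auto.
        intros w' [E|Hw'] Hf'. { subst; lra. }
        exfalso; apply Hno; eauto.
      * exfalso; apply Hno; eauto.
Qed.

Definition scal (l : R) (n : pt) : pt := (l * fst n, l * snd n).

Lemma dot_scal l n x : dot (scal l n) x = l * dot n x.
Proof. unfold dot, scal; simpl; ring. Qed.

Lemma vsub_self p : vsub p p = (0,0).
Proof. destruct p; unfold vsub; simpl; f_equal; ring. Qed.

Lemma inV_scal W p n l :
  0 <= l ->
  (forall w, In w W -> 0 < dot n (vsub w p) -> 2 * l * dot n (vsub w p) <= n2 (vsub w p)) ->
  inV W p (scal l n).
Proof.
  intros Hl H s Hs. rewrite dot_scal.
  destruct (Rlt_dec 0 (dot n (vsub s p))) as [Hp|Hp].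
  - specialize (H s Hs Hp). lra.
  - pose proof (n2_nonneg (vsub s p)). nra.
Qed.

Lemma dir_neighbor W p n :
  (exists w, In w W /\ 0 < dot n (vsub w p)) ->
  exists ws, In ws W /\ 0 < dot n (vsub ws p) /\ DT_adj (p :: W) p ws /\
    forall w, In w W -> 0 < dot n (vsub w p) ->
      n2 (vsub ws p) / dot n (vsub ws p) <= n2 (vsub w p) / dot n (vsub w p).
Proof.
  intros Hex.
  destruct (minimizer W (fun w => dot n (vsub w p)) (fun w => n2 (vsub w p)) Hex)
    as [ws [H1 [H2 H3]]]; simpl in *.
  exists ws. split; auto. split; auto. split; auto.
  assert (Hne : ws <> p).
  { intro E; subst. rewrite vsub_self in H2; unfold dot in H2; simpl in H2; lra. }
  split; [left; auto|]. split; [right; auto|]. split; [auto|].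
  apply edt_char.
  set (l := n2 (vsub ws p) / (2 * dot n (vsub ws p))).
  exists (scal l n). split.
  - rewrite dot_scal. unfold l. field. lra.
  - apply inV_cons. apply inV_scal.
    + unfold l. pose proof (n2_nonneg (vsub ws p)).
      apply Rmult_le_pos; auto. left; apply Rinv_0_lt_compat; lra.
    + intros w Hw Hpw. specialize (H3 w Hw Hpw).
      unfold l.
      apply (Rmult_le_compat_r (dot n (vsub w p))) in H3; [|lra].
      replace (n2 (vsub w p) / dot n (vsub w p) * dot n (vsub w p)) with (n2 (vsub w p)) in H3 by (field; lra).
      unfold Rdiv in *.
      replace (2 * (n2 (vsub ws p) * / (2 * dot n (vsub ws p))) * dot n (vsub w p))
        with (n2 (vsub ws p) * / dot n (vsub ws p) * dot n (vsub w p)) by (field; lra).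
      lra.
Qed.


Lemma cr_rot0 t u : cr u (rot t u) = sin t * n2 u.
Proof. destruct u; unfold cr, rot, n2, dot; simpl; ring. Qed.

Lemma dot_rot0 t u : dot u (rot t u) = cos t * n2 u.
Proof. destruct u; unfold n2, dot, rot; simpl; ring. Qed.

Lemma cr_rot a b u : cr (rot a u) (rot b u) = sin (b - a) * n2 u.
Proof. destruct u; unfold cr, rot, n2, dot; simpl. rewrite sin_minus. ring. Qed.

Lemma ccw_cr u v t : is_ccw_angle u v t ->
  exists k, 0 < k /\ k * cr u v = sin t * n2 u /\ k * dot u v = cos t * n2 u.
Proof.
  intros [_ [k [Hk E]]]. exists k. split; auto.
  rewrite <- cr_rot0, <- dot_rot0, E. destruct u, v; unfold cr, dot; simpl. split; ring.
Qed.

Lemma ccw_cr2 u v1 v2 t1 t2 : is_ccw_angle u v1 t1 -> is_ccw_angle u v2 t2 ->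
  exists k, 0 < k /\ k * cr v1 v2 = sin (t2 - t1) * n2 u.
Proof.
  intros [_ [k1 [Hk1 E1]]] [_ [k2 [Hk2 E2]]]. exists (k1 * k2). split; [nra|].
  rewrite <- cr_rot, E1, E2. destruct v1, v2; unfold cr; simpl. ring.
Qed.

Lemma polar x y : 0 < x*x + y*y ->
  exists al r, 0 <= al < 2*PI /\ 0 < r /\ x = r * cos al /\ y = r * sin al.
Proof.
  intros H.
  set (r := sqrt (x*x+y*y)).
  assert (Hr : 0 < r) by (apply sqrt_lt_R0; auto).
  assert (Hr2 : r * r = x*x+y*y) by (apply sqrt_sqrt; lra).
  set (u := x / r).
  assert (Hu2 : 1 - u*u = (y/r)*(y/r)).
  { unfold u. replace 1 with ((x*x+y*y)/(r*r)) by (rewrite Hr2; field; lra). field. lra. }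
  assert (Hub : -1 <= u <= 1).
  { assert (0 <= (y/r)*(y/r)) by nra. split; nra. }
  pose proof PI_RGT_0.
  destruct (Rle_dec 0 y) as [Hy|Hy].
  - exists (acos u), r. pose proof (acos_bound u). split; [|split; auto].
    + split; [lra|].
      lra.
    + split.
      * rewrite cos_acos by auto. unfold u; field; lra.
      * rewrite sin_acos by auto. unfold Rsqr. rewrite Hu2.
        rewrite sqrt_square.
        -- field; lra.
        -- apply Rmult_le_pos; [auto|left; apply Rinv_0_lt_compat; auto].
  - assert (Hub' : -1 < u < 1).
    { assert (0 < (y/r)*(y/r)).
      { assert (y / r < 0). { unfold Rdiv. assert (0 < / r) by (apply Rinv_0_lt_compat; auto). nra. } nra. }
      split; nra. }
    pose proof (acos_bound_lt u Hub').
    exists (2*PI - acos u), r. split; [lra|]. split; auto.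
    rewrite cos_minus, sin_minus, cos_2PI, sin_2PI.
    split.
    + rewrite cos_acos by lra. unfold u; field; lra.
    + rewrite sin_acos by lra. unfold Rsqr. rewrite Hu2.
      replace (y / r * (y / r)) with ((-(y/r)) * (-(y/r))) by ring.
      rewrite sqrt_square.
      * field; lra.
      * assert (y / r < 0). { unfold Rdiv. assert (0 < / r) by (apply Rinv_0_lt_compat; auto). nra. } lra.
Qed.

Lemma ang_exists u v : 0 < n2 u -> 0 < n2 v -> exists t, is_ccw_angle u v t.
Proof.
  destruct u as [u1 u2], v as [v1 v2]; unfold n2, dot; simpl; intros Hu Hv.
  destruct (polar u1 u2 Hu) as [au [ru [Hau [Hru [E1 E2]]]]].
  destruct (polar v1 v2 Hv) as [av [rv [Hav [Hrv [F1 F2]]]]].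
  pose proof PI_RGT_0.
  assert (Hcs : exists t, 0 < t <= 2*PI /\ cos t = cos (av - au) /\ sin t = sin (av - au)).
  { destruct (Rlt_dec 0 (av - au)).
    - exists (av - au). split; [lra|]. auto.
    - exists (av - au + 2*PI). split; [lra|].
      rewrite cos_plus, sin_plus, cos_2PI, sin_2PI. split; ring. }
  destruct Hcs as [t [Ht [Hc Hs]]].
  exists t. split; auto. exists (ru / rv). split.
  { apply Rdiv_lt_0_compat; auto. }
  unfold rot; simpl. rewrite Hc, Hs, cos_minus, sin_minus.
  pose proof (sin2_cos2 au) as Q. unfold Rsqr in Q.
  subst. f_equal.
  - transitivity (ru * cos av * (sin au * sin au + cos au * cos au)); [ring|].
    rewrite Q. field. lra.
  - transitivity (ru * sin av * (sin au * sin au + cos au * cos au)); [ring|].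
    rewrite Q. field. lra.
Qed.


Lemma DT_info W p x : DT_adj (p :: W) p x ->
  In x W /\ x <> p /\ exists c, 2 * dot c (vsub x p) = n2 (vsub x p) /\ inV W p c.
Proof.
  intros [_ [Hx [Hne Hd]]].
  destruct Hx as [E|Hx]; [congruence|].
  split; auto. split; auto.
  apply edt_char in Hd. destruct Hd as [c [H1 H2]]. exists c. split; auto.
  apply inV_uncons; auto.
Qed.

Lemma gp_col S x y z : general_position S -> In x S -> In y S -> In z S ->
  x <> y -> x <> z -> y <> z -> cr (vsub y x) (vsub z x) <> 0.
Proof. intros [G _] Hx Hy Hz H1 H2 H3. exact (G x y z Hx Hy Hz H1 H2 H3). Qed.

Lemma id_cr a b o w : cr a b * dot o w = cr w b * dot o a + cr a w * dot o b.
Proof. destruct a, b, o, w; unfold cr, dot; simpl; ring. Qed.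

Lemma reflex_finish P W p a q theta n :
  In p P -> In q P -> q <> p -> a <> p ->
  (forall w phi, DT_adj (p :: W) p w -> ccw_angle a p w phi -> theta <= phi) ->
  0 < dot n (vsub q p) ->
  (forall w phi, In w W -> ccw_angle a p w phi -> theta <= phi -> dot n (vsub w p) <= 0) ->
  DGminus_adj P W p q.
Proof.
  intros Hp Hq Hqp Hap Hmin Hn Hw.
  destruct (classic (exists w, In w W /\ 0 < dot n (vsub w p))) as [Hex|Hno].
  - exfalso.
    destruct (dir_neighbor W p n Hex) as [ws [H1 [H2 [H3 _]]]].
    destruct (DT_info W p ws H3) as [_ [Hne _]].
    destruct (ang_exists (vsub a p) (vsub ws p) (n2_pos p a Hap) (n2_pos p ws Hne)) as [phi Hphi].
    pose proof (Hmin ws phi H3 Hphi).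
    pose proof (Hw ws phi H1 Hphi H). lra.
  - split; auto. split; auto. split; [congruence|].
    apply edt_char.
    set (l := n2 (vsub q p) / (2 * dot n (vsub q p))).
    exists (scal l n). split.
    + rewrite dot_scal. unfold l. field. lra.
    + apply inV_scal.
      * unfold l. pose proof (n2_nonneg (vsub q p)).
        apply Rmult_le_pos; auto. left; apply Rinv_0_lt_compat; lra.
      * intros w Hw' Hpw. exfalso; apply Hno; eauto.
Qed.

Lemma empty_circ W p a b theta o :
  DT_adj (p :: W) p a -> DT_adj (p :: W) p b -> ccw_angle a p b theta ->
  (forall w phi, DT_adj (p :: W) p w -> ccw_angle a p w phi -> theta <= phi) ->
  0 < cr (vsub a p) (vsub b p) ->
  2 * dot o (vsub a p) = n2 (vsub a p) -> 2 * dot o (vsub b p) = n2 (vsub b p) ->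
  inV W p o.
Proof.
  intros Ha Hb Hth Hmin HD Hoa Hob s Hs.
  destruct (Rle_dec (2 * dot o (vsub s p)) (n2 (vsub s p))) as [Hle|Hgt]; auto.
  exfalso. apply Rnot_le_lt in Hgt.
  assert (Hex : exists w, In w W /\ 0 < dot o (vsub w p)).
  { exists s. split; auto. pose proof (n2_nonneg (vsub s p)). lra. }
  destruct (dir_neighbor W p o Hex) as [ws [H1 [H2 [H3 H4]]]].
  assert (Hws : n2 (vsub ws p) < 2 * dot o (vsub ws p)).
  { assert (0 < dot o (vsub s p)) by (pose proof (n2_nonneg (vsub s p)); lra).
    specialize (H4 s Hs H).
    assert (n2 (vsub s p) / dot o (vsub s p) < 2).
    { apply (Rmult_lt_reg_r (dot o (vsub s p))); auto.
      unfold Rdiv; rewrite Rmult_assoc, Rinv_l by lra. lra. }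
    assert (n2 (vsub ws p) / dot o (vsub ws p) < 2) by lra.
    apply (Rmult_lt_compat_r (dot o (vsub ws p))) in H5; auto.
    unfold Rdiv in H5; rewrite Rmult_assoc, Rinv_l in H5 by lra. lra. }
  destruct (DT_info W p a Ha) as [Haw [Hap [ca [Hca1 Hca2]]]].
  destruct (DT_info W p b Hb) as [Hbw [Hbp [cb [Hcb1 Hcb2]]]].
  destruct (DT_info W p ws H3) as [_ [Hwsp _]].
  set (a' := vsub a p) in *. set (b' := vsub b p) in *. set (w' := vsub ws p) in *.
  pose proof (id_cr a' b' o w') as I1.
  pose proof (id_cr a' b' ca w') as I2.
  pose proof (id_cr a' b' cb w') as I3.
  pose proof (Hca2 b Hbw) as Cab. pose proof (Hca2 ws H1) as Caw.
  pose proof (Hcb2 a Haw) as Cba. pose proof (Hcb2 ws H1) as Cbw.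
  fold b' in Cab. fold w' in Caw, Cbw. fold a' in Cba.
  set (D := cr a' b') in *. set (X := cr w' b') in *. set (Y := cr a' w') in *.
  assert (Z1 : 0 < D * (2 * dot o w' - 2 * dot ca w')) by (apply Rmult_lt_0_compat; lra).
  assert (Z2 : 0 < D * (2 * dot o w' - 2 * dot cb w')) by (apply Rmult_lt_0_compat; lra).
  assert (E1 : D * (2 * dot o w' - 2 * dot ca w') = Y * (n2 b' - 2 * dot ca b')).
  { transitivity (2*(D*dot o w') - 2*(D*dot ca w')); [ring|]. rewrite I1, I2.
    transitivity (X*(2*dot o a') + Y*(2*dot o b') - X*(2*dot ca a') - Y*(2*dot ca b')); [ring|].
    rewrite Hoa, Hob, Hca1. ring. }
  assert (E2 : D * (2 * dot o w' - 2 * dot cb w') = X * (n2 a' - 2 * dot cb a')).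
  { transitivity (2*(D*dot o w') - 2*(D*dot cb w')); [ring|]. rewrite I1, I3.
    transitivity (X*(2*dot o a') + Y*(2*dot o b') - X*(2*dot cb a') - Y*(2*dot cb b')); [ring|].
    rewrite Hoa, Hob, Hcb1. ring. }
  assert (Z1' : 0 < Y * (n2 b' - 2 * dot ca b')) by lra.
  assert (Z2' : 0 < X * (n2 a' - 2 * dot cb a')) by lra.
  assert (HY : 0 < Y) by nra.
  assert (HX : 0 < X) by nra.
  destruct (ang_exists a' w' (n2_pos p a Hap) (n2_pos p ws Hwsp)) as [phi Hphi].
  pose proof (Hmin ws phi H3 Hphi) as Hle.
  destruct (ccw_cr _ _ _ Hphi) as [k [Hk [Hk1 _]]].
  destruct (ccw_cr2 _ _ _ _ _ Hth Hphi) as [k2 [Hk2 Hk3]].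
  pose proof (n2_pos p a Hap) as Ha2.
  change (vsub a p) with a' in Ha2, Hk1, Hk3. change (vsub b p) with b' in Hk3.
  change (vsub ws p) with w' in Hk1, Hk3.
  destruct Hphi as [[Hp0 Hp2] _].
  destruct Hth as [[Ht0 Ht2] _].
  assert (Hs1 : 0 < sin phi).
  { assert (0 < k * Y) by nra. fold Y in Hk1. nra. }
  assert (Hphi_pi : phi < PI).
  { destruct (Rlt_dec phi PI); auto. pose proof (sin_le_0 phi ltac:(lra) Hp2). lra. }
  assert (Hcrbw : cr b' w' = - X) by (unfold X; destruct b', w'; unfold cr; simpl; ring).
  rewrite Hcrbw in Hk3.
  assert (sin (phi - theta) < 0) by nra.
  pose proof (sin_ge_0 (phi - theta) ltac:(lra) ltac:(lra)). lra.
Qed.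


Lemma ctr_dist O p x : dist2 O x = dist2 O p + n2 (vsub x p) - 2 * dot (vsub O p) (vsub x p).
Proof. destruct O, p, x; unfold dist2, n2, dot, vsub; simpl; ring. Qed.

Lemma ctr_shift p o : vsub (fst p + fst o, snd p + snd o) p = o.
Proof. destruct p, o; unfold vsub; simpl; f_equal; ring. Qed.

Lemma dist2_self_shift p o : dist2 (fst p + fst o, snd p + snd o) p = n2 o.
Proof. destruct p, o; unfold dist2, n2, dot; simpl; ring. Qed.

Lemma same_cos a p x t : ccw_angle a p x t -> a = x -> a <> p -> 0 < cos t.
Proof.
  intros H E Hap. subst. destruct (ccw_cr _ _ _ H) as [k [Hk [_ Hd]]].
  pose proof (n2_pos p x Hap). change (dot (vsub x p) (vsub x p)) with (n2 (vsub x p)) in Hd. nra.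
Qed.

Lemma dot_perp_a u x : dot (- snd u, fst u) x = cr u x.
Proof. destruct u, x; unfold dot, cr; simpl; ring. Qed.

Lemma dot_perp_b u x : dot (snd u, - fst u) x = - cr u x.
Proof. destruct u, x; unfold dot, cr; simpl; ring. Qed.

Lemma cr_self u : cr u u = 0.
Proof. destruct u; unfold cr; simpl; ring. Qed.

Lemma cr_anti u v : cr u v = - cr v u.
Proof. destruct u, v; unfold cr; simpl; ring. Qed.

Lemma sgn_lt k n x s : 0 < k -> 0 < n -> k * x = s * n -> s < 0 -> x < 0.
Proof. intros. nra. Qed.
Lemma sgn_gt k n x s : 0 < k -> 0 < n -> k * x = s * n -> 0 < s -> 0 < x.
Proof. intros. nra. Qed.
Lemma sgn_le k n x s : 0 < k -> 0 < n -> k * x = s * n -> s <= 0 -> x <= 0.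
Proof. intros. nra. Qed.
Lemma sgn_ge k n x s : 0 < k -> 0 < n -> k * x = s * n -> 0 <= s -> 0 <= x.
Proof. intros. nra. Qed.
Lemma sgn_eq k n x : 0 < k -> k * x = 0 * n -> x = 0.
Proof. intros. nra. Qed.
Lemma aux_l l d m : 0 < l -> l < 1 -> 0 < d -> 2 * d <= m -> 2 * l * d <= m.
Proof. intros. nra. Qed.
Lemma n2_zero : n2 (0,0) = 0.
Proof. unfold n2, dot; simpl; ring. Qed.
Lemma dot_zero o : dot o (0,0) = 0.
Proof. unfold dot; simpl; ring. Qed.


Theorem mainTheorem2 :
  forall (P W : list pt) (p a b q : pt) (theta : R),
    general_position (P ++ W) ->
    In p P ->
    (exists w, In w W /\ w <> p) ->
    DT_adj (p :: W) p a ->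
    DT_adj (p :: W) p b ->
    ccw_angle a p b theta ->
    (forall w phi, DT_adj (p :: W) p w -> ccw_angle a p w phi -> theta <= phi) ->
    In q P -> q <> p ->
    (exists phi, ccw_angle a p q phi /\ phi < theta) ->
    (PI <= theta -> DGminus_adj P W p q) /\
    (theta < PI -> (DGminus_adj P W p q <-> in_circle_interior p a b q)).
Proof.
  intros P W p a b q theta HG HpP _ Ha Hb Hth Hmin HqP Hqp [phq [Hphq Hphlt]].
  pose proof Ha as Ha0. pose proof Hb as Hb0.
  destruct (DT_info W p a Ha) as [Haw [Hap [ca [Hca1 Hca2]]]].
  destruct (DT_info W p b Hb) as [Hbw [Hbp [cb [Hcb1 Hcb2]]]].
  assert (Hp' : In p (P ++ W)) by (apply in_or_app; auto).
  assert (Hq' : In q (P ++ W)) by (apply in_or_app; auto).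
  assert (Ha' : In a (P ++ W)) by (apply in_or_app; auto).
  assert (Hb' : In b (P ++ W)) by (apply in_or_app; auto).
  pose proof (n2_pos p a Hap) as Ha2.
  pose proof (n2_pos p q Hqp) as Hq2.
  destruct (ccw_cr _ _ _ Hth) as [kb [Hkb [Hkb1 Hkb2]]].
  destruct (ccw_cr _ _ _ Hphq) as [kq [Hkq [Hkq1 Hkq2]]].
  destruct (ccw_cr2 _ _ _ _ _ Hth Hphq) as [k3 [Hk3 Hk3e]].
  pose proof PI_RGT_0 as Hpi0.
  assert (Hthb : 0 < theta <= 2 * PI) by (destruct Hth; auto).
  assert (Hphb : 0 < phq <= 2 * PI) by (destruct Hphq; auto).
  split.
  - intro Hpi.
    assert (Hneq : theta <> PI).
    { intro E. rewrite E, sin_PI in Hkb1.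
      assert (Hc : cr (vsub a p) (vsub b p) = 0) by exact (sgn_eq _ _ _ Hkb Hkb1).
      assert (Hab : a <> b).
      { intro E2. pose proof (same_cos a p b theta Hth E2 Hap). rewrite E, cos_PI in H. lra. }
      apply (gp_col _ p a b HG Hp' Ha' Hb'); auto. }
    assert (Hcase : 0 < cr (vsub a p) (vsub q p) \/ cr (vsub b p) (vsub q p) < 0).
    { destruct (Rlt_dec phq PI) as [Hl|Hl].
      - left. pose proof (sin_gt_0 phq ltac:(lra) Hl). exact (sgn_gt _ _ _ _ Hkq Ha2 Hkq1 H).
      - destruct (Rlt_dec (-PI) (phq - theta)) as [Hl2|Hl2].
        + right. pose proof (sin_lt_0_var (phq - theta) Hl2 ltac:(lra)). exact (sgn_lt _ _ _ _ Hk3 Ha2 Hk3e H).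
        + exfalso. assert (E : phq = PI) by lra. rewrite E, sin_PI in Hkq1.
          assert (Hc : cr (vsub a p) (vsub q p) = 0) by exact (sgn_eq _ _ _ Hkq Hkq1).
          assert (Haq : a <> q).
          { intro E2. pose proof (same_cos a p q phq Hphq E2 Hap). rewrite E, cos_PI in H. lra. }
          apply (gp_col _ p a q HG Hp' Ha' Hq'); auto. }
    destruct Hcase as [Hc|Hc].
    + apply (reflex_finish P W p a q theta (- snd (vsub a p), fst (vsub a p))); auto.
      * rewrite dot_perp_a. auto.
      * intros w phi Hw Hwphi Hle. rewrite dot_perp_a.
        destruct (ccw_cr _ _ _ Hwphi) as [kw [Hkw [Hkw1 _]]].
        destruct Hwphi as [[Hw0 Hw2] _].
        pose proof (sin_le_0 phi ltac:(lra) Hw2). exact (sgn_le _ _ _ _ Hkw Ha2 Hkw1 H).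
    + apply (reflex_finish P W p a q theta (snd (vsub b p), - fst (vsub b p))); auto.
      * rewrite dot_perp_b. lra.
      * intros w phi Hw Hwphi Hle. rewrite dot_perp_b.
        destruct (ccw_cr2 _ _ _ _ _ Hth Hwphi) as [kw [Hkw Hkw1]].
        destruct Hwphi as [[Hw0 Hw2] _].
        pose proof (sin_ge_0 (phi - theta) ltac:(lra) ltac:(lra)).
        assert (0 <= cr (vsub b p) (vsub w p)) by exact (sgn_ge _ _ _ _ Hkw Ha2 Hkw1 H). lra.
  - intro Hlt.
    set (a' := vsub a p) in *. set (b' := vsub b p) in *. set (q' := vsub q p) in *.
    assert (HD : 0 < cr a' b').
    { pose proof (sin_gt_0 theta ltac:(lra) Hlt). exact (sgn_gt _ _ _ _ Hkb Ha2 Hkb1 H). }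
    assert (HY : 0 < cr a' q').
    { pose proof (sin_gt_0 phq ltac:(lra) ltac:(lra)). exact (sgn_gt _ _ _ _ Hkq Ha2 Hkq1 H). }
    assert (HX : 0 < cr q' b').
    { pose proof (sin_lt_0_var (phq - theta) ltac:(lra) ltac:(lra)).
      rewrite cr_anti. assert (cr b' q' < 0) by exact (sgn_lt _ _ _ _ Hk3 Ha2 Hk3e H). lra. }
    assert (Hab : a <> b).
    { intro E. assert (a' = b') by (unfold a', b'; rewrite E; auto).
      rewrite H, cr_self in HD. lra. }
    assert (Haq : a <> q).
    { intro E. assert (a' = q') by (unfold a', q'; rewrite E; auto).
      rewrite H, cr_self in HY. lra. }
    assert (Hbq : b <> q).
    { intro E. assert (q' = b') by (unfold q', b'; rewrite E; auto).
      rewrite H, cr_self in HX. lra. }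
    split.
    + intros [_ [_ [_ Hd]]]. apply edt_char in Hd. destruct Hd as [c [Hc1 Hc2]].
      fold q' in Hc1.
      set (D := cr a' b') in *.
      set (o := ((n2 a' * snd b' - n2 b' * snd a') / (2 * D),
                 (fst a' * n2 b' - fst b' * n2 a') / (2 * D))).
      assert (Hoa : 2 * dot o a' = n2 a').
      { unfold o, dot. cbn [fst snd]. unfold D, cr in HD |- *. field. lra. }
      assert (Hob : 2 * dot o b' = n2 b').
      { unfold o, dot. cbn [fst snd]. unfold D, cr in HD |- *. field. lra. }
      pose proof (id_cr a' b' o q') as I1. pose proof (id_cr a' b' c q') as I2.
      pose proof (Hc2 a Haw) as Cca. pose proof (Hc2 b Hbw) as Ccb.
      fold a' in Cca. fold b' in Ccb. fold D in I1, I2.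
      set (X := cr q' b') in *. set (Y := cr a' q') in *.
      assert (E : D * (2 * dot o q') - D * (2 * dot c q') =
                  X * (n2 a' - 2 * dot c a') + Y * (n2 b' - 2 * dot c b')).
      { transitivity (2 * (D * dot o q') - 2 * (D * dot c q')); [ring|]. rewrite I1, I2.
        transitivity (X*(2*dot o a') + Y*(2*dot o b') - X*(2*dot c a') - Y*(2*dot c b')); [ring|].
        rewrite Hoa, Hob. ring. }
      assert (Hge : D * (2 * dot o q') - D * (2 * dot c q') >= 0).
      { rewrite E. assert (0 <= X * (n2 a' - 2 * dot c a')) by (apply Rmult_le_pos; lra).
        assert (0 <= Y * (n2 b' - 2 * dot c b')) by (apply Rmult_le_pos; lra). lra. }
      assert (Hge2 : n2 q' <= 2 * dot o q').
      { rewrite <- Hc1. apply (Rmult_le_reg_l D); auto. lra. }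
      set (O := (fst p + fst o, snd p + snd o)).
      assert (Hdx : forall x, dist2 O x = n2 o + n2 (vsub x p) - 2 * dot o (vsub x p)).
      { intro x. rewrite (ctr_dist O p x). unfold O. rewrite dist2_self_shift, ctr_shift. ring. }
      destruct (Rle_lt_or_eq_dec _ _ Hge2) as [Hs|Heq].
      * exists O, (n2 o). rewrite !Hdx. fold a' b' q'. rewrite vsub_self.
        rewrite n2_zero, dot_zero. repeat split; lra.
      * exfalso. destruct HG as [_ HC].
        apply (HC p a b q Hp' Ha' Hb' Hq'); auto; try congruence.
        exists O, (n2 o). rewrite !Hdx. fold a' b' q'. rewrite vsub_self.
        rewrite n2_zero, dot_zero. repeat split; lra.
    + intros [O [r [H1 [H2 [H3 H4]]]]].
      set (o := vsub O p).
      rewrite (ctr_dist O p a), H1 in H2. rewrite (ctr_dist O p b), H1 in H3. rewrite (ctr_dist O p q), H1 in H4.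
      fold a' b' q' o in H2, H3, H4.
      assert (Hoa : 2 * dot o a' = n2 a') by lra.
      assert (Hob : 2 * dot o b' = n2 b') by lra.
      assert (Hoq : n2 q' < 2 * dot o q') by lra.
      pose proof (empty_circ W p a b theta o Ha0 Hb0 Hth Hmin HD Hoa Hob) as HV.
      split; auto. split; auto. split; [congruence|].
      apply edt_char.
      set (l := n2 q' / (2 * dot o q')).
      assert (Hl0 : 0 < l) by (unfold l; apply Rdiv_lt_0_compat; lra).
      assert (Hl1 : l < 1).
      { unfold l. apply (Rmult_lt_reg_r (2 * dot o q')); [lra|].
        unfold Rdiv; rewrite Rmult_assoc, Rinv_l by lra. lra. }
      exists (scal l o). split.
      * rewrite dot_scal. change (vsub q p) with q'. unfold l. field. lra.
      * apply inV_scal; [lra|].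
        intros w Hw Hpw. pose proof (HV w Hw). apply aux_l; auto.
Qed.
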